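(* In the setting below, if $$\sum_{t\in\mathcal K}\hat d_t^\top Z^\top f(x_t)< \sum_{t\in\mathcal K^c}\|Z^\top f(x_t)\|_2\quad\text{for all nonzero } Z\in\mathbb{R}^{m\times n},$$ then $\bar A$ is the unique global minimizer of $\min_{A\in\mathbb{R}^{n\times m}}\sum_{t=0}^{T-1}\|(\bar A-A)f(x_t)+\bar d_t\|_2$.
   Context: $f:\mathbb{R}^n\to\mathbb{R}^m$ is given, $\bar A\in\mathbb{R}^{n\times m}$, $\bar d_0,\dots,\bar d_{T-1}\in\mathbb{R}^n$, and $x_0=0_n$, $x_{t+1}=\bar A f(x_t)+\bar d_t$ for $t=0,\dots,T-1$. $\mathcal K:=\{t\in\{0,\dots,T-1\}:\bar d_t\ne 0\}$, $\mathcal K^c:=\{0,\dots,T-1\}\setminus\mathcal K$, $\hat d_t:=\bar d_t/\|\bar d_t\|_2$ for $t\in\mathcal K$. *)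

(* Defs.v *)
From HB Require Import structures.
From mathcomp Require Import all_boot all_order all_algebra.
Set Implicit Arguments. Unset Strict Implicit. Unset Printing Implicit Defensive.
Import Order.TTheory GRing.Theory Num.Theory.
Local Open Scope ring_scope.

Definition norm2 (R : rcfType) (k : nat) (v : 'cV[R]_k) : R :=
  Num.sqrt (\sum_(i < k) v i 0 ^+ 2).

Fixpoint traj (R : rcfType) (n m : nat) (f : 'cV[R]_n -> 'cV[R]_m)
  (Abar : 'M[R]_(n, m)) (d : nat -> 'cV[R]_n) (t : nat) : 'cV[R]_n :=
  match t with
  | 0 => 0
  | t'.+1 => Abar *m f (traj f Abar d t') + d t'
  end.

Definition dhat (R : rcfType) (n : nat) (d : nat -> 'cV[R]_n) (t : nat) : 'cV[R]_n :=
  (norm2 (d t))^-1 *: d t.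

Definition objective (R : rcfType) (n m T : nat) (f : 'cV[R]_n -> 'cV[R]_m)
  (Abar : 'M[R]_(n, m)) (d : nat -> 'cV[R]_n) (A : 'M[R]_(n, m)) : R :=
  \sum_(t < T) norm2 ((Abar - A) *m f (traj f Abar d t) + d t).

(* Main.v *)
Require Import Defs.
From HB Require Import structures.
From mathcomp Require Import all_boot all_order all_algebra.
From mathcomp Require Import ring lra.
Import Order.TTheory GRing.Theory Num.Theory.
Local Open Scope ring_scope.

Section Aux.
Variable R : rcfType.

Definition inner {k : nat} (u v : 'cV[R]_k) := \sum_(i < k) u i 0 * v i 0.

Lemma inner_mx {k} (u v : 'cV[R]_k) : (u^T *m v) 0 0 = inner u v.
Proof. by rewrite mxE; apply: eq_bigr => i _; rewrite mxE. Qed.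

Lemma sumsq_ge0 {k} (u : 'cV[R]_k) : 0 <= \sum_(i < k) u i 0 ^+ 2.
Proof. by apply: sumr_ge0 => i _; exact: sqr_ge0. Qed.

Lemma norm2_ge0 {k} (u : 'cV[R]_k) : 0 <= norm2 u.
Proof. exact: sqrtr_ge0. Qed.

Lemma norm2_sq {k} (u : 'cV[R]_k) : norm2 u ^+ 2 = inner u u.
Proof.
rewrite /norm2 sqr_sqrtr ?sumsq_ge0 //.
Qed.

Lemma norm2_eq0 {k} (u : 'cV[R]_k) : norm2 u = 0 -> u = 0.
Proof.
move=> /eqP; rewrite sqrtr_eq0 => H.
have H0 : \sum_(i < k) u i 0 ^+ 2 = 0 by apply/eqP; rewrite eq_le H sumsq_ge0.
apply/matrixP => i j; rewrite (ord1 j) mxE.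
have := psumr_eq0P (fun i _ => sqr_ge0 (u i 0)) H0 (i:=i) isT.
by move/eqP; rewrite sqrf_eq0 => /eqP.
Qed.

Lemma norm2_0 {k} : norm2 (0 : 'cV[R]_k) = 0.
Proof.
rewrite /norm2 big1 ?sqrtr0 // => i _; by rewrite mxE expr0n.
Qed.

Lemma norm2N {k} (u : 'cV[R]_k) : norm2 (- u) = norm2 u.
Proof. rewrite /norm2; congr Num.sqrt; apply: eq_bigr => i _; by rewrite mxE sqrrN. Qed.

Lemma CS {k} (u v : 'cV[R]_k) : inner u v <= norm2 u * norm2 v.
Proof.
set a := norm2 u; set b := norm2 v.
have ha : 0 <= a := norm2_ge0 u. have hb : 0 <= b := norm2_ge0 v.
have e : \sum_(i < k) (b * u i 0 - a * v i 0) ^+ 2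
   = b ^+ 2 * inner u u - 2 * a * b * inner u v + a ^+ 2 * inner v v.
  rewrite /inner !mulr_sumr -sumrB -big_split /=.
  by apply: eq_bigr => i _; ring.
have h0 : 0 <= \sum_(i < k) (b * u i 0 - a * v i 0) ^+ 2.
  by apply: sumr_ge0 => i _; exact: sqr_ge0.
rewrite e -!norm2_sq -/a -/b in h0.
have [a0|ap] := eqVneq a 0.
  apply: (le_trans _ (mulr_ge0 ha hb)); rewrite (norm2_eq0 _ a0) /inner big1 //.
  by move=> i _; rewrite mxE mul0r.
have [b0|bp] := eqVneq b 0.
  apply: (le_trans _ (mulr_ge0 ha hb)); rewrite (norm2_eq0 _ b0) /inner big1 //.
  by move=> i _; rewrite mxE mulr0.
have abp : 0 < a * b by rewrite mulr_gt0 // lt_def ?ap ?bp.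
have : 0 <= (2 * a * b) * (a * b - inner u v) by rewrite -[X in _ <= X]addr0; nra.
rewrite pmulr_rge0 ?subr_ge0 //; nra.
Qed.
Lemma step_nz {k} (w dd : 'cV[R]_k) : dd != 0 ->
  norm2 dd + (((norm2 dd)^-1 *: dd)^T *m w) 0 0 <= norm2 (w + dd).
Proof.
move=> dn0; set s := norm2 dd.
have sp : 0 < s.
  rewrite lt_def norm2_ge0 andbT; apply: contraNneq dn0 => h.
  by rewrite (norm2_eq0 _ h).
have -> : (((s)^-1 *: dd)^T *m w) 0 0 = s^-1 * inner dd w.
  by rewrite linearZ /= -scalemxAl mxE inner_mx.
have hcs := CS dd (w + dd).
have ei : inner dd (w + dd) = inner dd w + s ^+ 2.
  rewrite norm2_sq /inner -big_split /=; apply: eq_bigr => i _.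
  by rewrite mxE mulrDr.
rewrite ei -/s in hcs.
rewrite -(ler_pM2l sp) mulrDr mulrA mulfV ?mul1r; last by rewrite gt_eqF.
by rewrite addrC -expr2.
Qed.
End Aux.

Theorem corollary3 (R : rcfType) (n m T : nat) (f : 'cV[R]_n -> 'cV[R]_m)
  (Abar : 'M[R]_(n, m)) (d : nat -> 'cV[R]_n) :
  (forall Z : 'M[R]_(m, n), Z != 0 ->
     \sum_(t < T | d t != 0) ((dhat d t)^T *m Z^T *m f (traj f Abar d t)) 0 0
     < \sum_(t < T | d t == 0) norm2 (Z^T *m f (traj f Abar d t))) ->
  (forall A : 'M[R]_(n, m), objective T f Abar d Abar <= objective T f Abar d A) /\
  (forall A : 'M[R]_(n, m),
     (forall B : 'M[R]_(n, m), objective T f Abar d A <= objective T f Abar d B) ->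
     A = Abar).
Proof.
move=> H.
set F := fun t => f (traj f Abar d t).
have obj0 : objective T f Abar d Abar = \sum_(t < T) norm2 (d t).
  by apply: eq_bigr => t _; rewrite subrr mul0mx add0r.
have objA : forall A, objective T f Abar d A
    = \sum_(t < T) norm2 ((Abar - A) *m F t + d t) by [].
have key : forall E : 'M[R]_(n, m), E != 0 ->
    \sum_(t < T) norm2 (d t) < \sum_(t < T) norm2 (E *m F t + d t).
  move=> E E0.
  have HZ := H (- E^T).
  rewrite oppr_eq0 trmx_eq0 in HZ; have {HZ} HZ := HZ E0.
  set c := fun t => ((dhat d t)^T *m (E *m F t)) 0 0.
  have e1 : \sum_(t < T | d t != 0)
      ((dhat d t)^T *m (- E^T)^T *m f (traj f Abar d t)) 0 0
      = - \sum_(t < T | d t != 0) c t.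
    rewrite -sumrN; apply: eq_bigr => t _.
    by rewrite linearN /= trmxK mulmxN mulNmx -mulmxA mxE.
  have e2 : \sum_(t < T | d t == 0) norm2 ((- E^T)^T *m f (traj f Abar d t))
      = \sum_(t < T | d t == 0) norm2 (E *m F t).
    apply: eq_bigr => t _.
    by rewrite linearN /= trmxK mulNmx norm2N.
  rewrite e1 e2 in HZ.
  set g := fun t : 'I_T => if d t != 0 then c t else norm2 (E *m F t).
  have gpos : 0 < \sum_(t < T) g t.
    rewrite (bigID (fun t : 'I_T => d t != 0)) /=.
    have -> : \sum_(t < T | d t != 0) g t = \sum_(t < T | d t != 0) c t.
      by apply: eq_bigr => t hd; rewrite /g hd.
    have -> : \sum_(t < T | ~~ (d t != 0)) g t
        = \sum_(t < T | d t == 0) norm2 (E *m F t).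
      rewrite [LHS](eq_bigl (fun t : 'I_T => d t == 0)); last by move=> t; rewrite negbK.
      by apply: eq_bigr => t hd; rewrite /g (eqP hd) eqxx.
    by rewrite -subr_gt0 opprK addrC in HZ.
  have step : forall t : 'I_T, norm2 (d t) + g t <= norm2 (E *m F t + d t).
    move=> t; rewrite /g; case: ifP => hd.
      by rewrite /c /dhat; apply: step_nz.
    move/negbFE/eqP: hd => ->.
    by rewrite addr0 norm2_0 add0r.
  apply: (lt_le_trans _ (ler_sum _ (fun t _ => step t))).
  by rewrite big_split /= ltrDl.
split.
  move=> A; rewrite obj0 objA.
  have [->|E0] := eqVneq (Abar - A) 0.
    by apply: ler_sum => t _; rewrite mul0mx add0r.
  exact: ltW (key _ E0).
move=> A Amin; apply/eqP; rewrite eq_sym -subr_eq0.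
apply/negPn/negP => E0.
have := key _ E0; rewrite -obj0 -objA.
by rewrite ltNge Amin.
Qed.
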